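(* Let $m,n$ be positive integers. The poset $\mathbf{P}_{m,n}$ is a ranked poset in which the rank of $(i,j,k)$ equals $m+n-2-i-j+2k$. It has a unique minimal element $(m-1,n-1,0)$, which has rank $0$. The maximal elements are of the form $(i,i,i)$ and have rank $m+n-2$.
   Context: The poset $\mathbf{P}_{m,n}$ has elements the integer triples $(i,j,k)$ with $0\le k\le m-1$, $k\le j\le n-1$, $k\le i\le m-1$, and partial order generated by the covering relations: $(i,j,k)$ covers each of $(i+1,j,k)$, $(i,j+1,k)$, $(i-1,j,k-1)$, $(i,j-1,k-1)$ that is an element of $\mathbf{P}_{m,n}$. *)

(* Defs.v *)
From mathcomp Require Import all_boot.
Set Implicit Arguments. Unset Strict Implicit. Unset Printing Implicit Defensive.

Definition triple := (nat * nat * nat)%type.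

Definition inP (m n : nat) (x : triple) : bool :=
  let: (i, j, k) := x in [&& k <= m - 1, k <= j, j <= n - 1, k <= i & i <= m - 1].

Definition gen (m n : nat) (x y : triple) : Prop :=
  inP m n x /\ inP m n y /\
  let: (a, b, c) := x in let: (i, j, k) := y in
  [\/ (a, b, c) = (i.+1, j, k),
      (a, b, c) = (i, j.+1, k),
      [/\ a.+1 = i, b = j & c.+1 = k] |
      [/\ a = i, b.+1 = j & c.+1 = k]].

Inductive Ple (m n : nat) : triple -> triple -> Prop :=
| Ple_refl x : inP m n x -> Ple m n x x
| Ple_step x y z : gen m n x y -> Ple m n y z -> Ple m n x z.

Definition Plt (m n : nat) (x y : triple) : Prop := Ple m n x y /\ x <> y.

Definition Pcovers (m n : nat) (x y : triple) : Prop :=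
  Plt m n x y /\ ~ (exists z, inP m n z /\ Plt m n x z /\ Plt m n z y).

Definition Pminimal (m n : nat) (x : triple) : Prop :=
  inP m n x /\ forall y, inP m n y -> Ple m n y x -> y = x.

Definition Pmaximal (m n : nat) (x : triple) : Prop :=
  inP m n x /\ forall y, inP m n y -> Ple m n x y -> y = x.

(* rank (i,j,k) = m+n-2-i-j+2k  (no truncation occurs on elements of P) *)
Definition rankP (m n : nat) (x : triple) : nat :=
  let: (i, j, k) := x in m + n - 2 - i - j + 2 * k.

(* Main.v *)
Require Import Defs.
From mathcomp Require Import all_boot.
From mathcomp Require Import zify.

Lemma gen_rank {m n x y} : 0 < m -> 0 < n -> gen m n x y -> rankP m n y = (rankP m n x).+1.
Proof.
move=> hm hn; case: x => [[a b] c]; case: y => [[i j] k].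
rewrite /gen /inP /rankP => -[/and5P [h1 h2 h3 h4 h5] [/and5P [h6 h7 h8 h9 h10]]].
case=> [[? ? ?]|[? ? ?]|[? ? ?]|[? ? ?]]; subst; lia.
Qed.

Lemma Ple_inv {m n x y} : 0 < m -> 0 < n -> Ple m n x y ->
  [/\ inP m n x, inP m n y & (x = y \/ rankP m n x < rankP m n y)].
Proof.
move=> hm hn; elim=> [z hz|a b c hg _ [hb hc hr]]; first by split => //; left.
have hr' := gen_rank hm hn hg.
case: hg => ha [_ _]; split => //; right.
case: hr => [<-|]; lia.
Qed.

Lemma rank_le {m n x} : 0 < m -> 0 < n -> inP m n x -> rankP m n x <= m + n - 2.
Proof.
move=> hm hn; case: x => [[i j] k]; rewrite /inP /rankP => /and5P [? ? ? ? ?]; lia.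
Qed.

Theorem proposition3p17 (m n : nat) (hm : 0 < m) (hn : 0 < n) :
  [/\ (* antisymmetry: P_{m,n} is a poset *)
      (forall x y, inP m n x -> inP m n y -> Ple m n x y -> Ple m n y x -> x = y),
      (* ranked, with rank function rankP: covers raise the rank by one *)
      (forall x y, inP m n x -> inP m n y -> Pcovers m n x y ->
         rankP m n y = (rankP m n x).+1),
      (* unique minimal element (m-1,n-1,0), of rank 0 *)
      (forall x, Pminimal m n x <-> x = (m - 1, n - 1, 0)),
      rankP m n (m - 1, n - 1, 0) = 0 &
      (
      (* maximal elements are exactly those of the form (i,i,i) *)
      (forall x, Pmaximal m n x <-> (inP m n x /\ exists i, x = (i, i, i))) /\
      (* and they have rank m+n-2 *)
      (forall i, inP m n (i, i, i) -> rankP m n (i, i, i) = m + n - 2))].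
Proof.
split.
- move=> x y _ _ /(Ple_inv hm hn) [_ _ [//|h1]] /(Ple_inv hm hn) [_ _ [//|h2]].
  lia.
- move=> x y hx hy [[hxy hne] hnz].
  case: hxy hne hnz => [z _ /(_ erefl)//|a b c hg hbc hne hnz].
  have hr := gen_rank hm hn hg.
  case: (Ple_inv hm hn hbc) => hb hc [eb|rb]; first by rewrite -eb.
  exfalso; apply: hnz; exists b; split => //; split.
  + split; first by apply: Ple_step hg (Ple_refl hb).
    move=> e; rewrite e in hr; lia.
  + split => // e; rewrite e in rb; lia.
- move=> [[i j] k]; split.
  + move=> [hx hmin].
    have Hin : forall y, gen m n y (i, j, k) -> False.
      move=> y hg; have hr := gen_rank hm hn hg.
      have e := hmin y (proj1 hg) (Ple_step hg (Ple_refl hx)).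
      rewrite e in hr; lia.
    move: (hx); rewrite /inP => /and5P [h1 h2 h3 h4 h5].
    case: (posnP k) => [k0|kpos].
    * subst k; case: (ltnP i (m - 1)) => hi.
        exfalso; apply: (Hin (i.+1, j, 0)); split; last split => //.
          rewrite /inP; apply/and5P; split; lia.
        by constructor 1.
      case: (ltnP j (n - 1)) => hj.
        exfalso; apply: (Hin (i, j.+1, 0)); split; last split => //.
          rewrite /inP; apply/and5P; split; lia.
        by constructor 2.
      have -> : i = m - 1 by lia.
      have -> : j = n - 1 by lia.
      by [].
    * exfalso; apply: (Hin (i.-1, j, k.-1)); split; last split => //.
        rewrite /inP; apply/and5P; split; lia.
      constructor 3; split => //; lia.
  + case=> -> -> ->.
    have hx : inP m n (m - 1, n - 1, 0) by rewrite /inP; apply/and5P; split; lia.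
    split => // y hy /(Ple_inv hm hn) [_ _ [//|]].
    rewrite /rankP; lia.
- rewrite /rankP; lia.
split.
- move=> [[i j] k]; split.
  + move=> [hx hmax]; split => //.
    have Hin : forall y, gen m n (i, j, k) y -> False.
      move=> y hg; have hr := gen_rank hm hn hg.
      have e := hmax y (proj1 (proj2 hg)) (Ple_step hg (Ple_refl (proj1 (proj2 hg)))).
      rewrite e in hr; lia.
    move: (hx); rewrite /inP => /and5P [h1 h2 h3 h4 h5].
    case: (ltnP k i) => hi.
      exfalso; apply: (Hin (i.-1, j, k)); split => //; split.
        rewrite /inP; apply/and5P; split; lia.
      constructor 1; congr (_, _, _); lia.
    case: (ltnP k j) => hj.
      exfalso; apply: (Hin (i, j.-1, k)); split => //; split.
        rewrite /inP; apply/and5P; split; lia.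
      constructor 2; congr (_, _, _); lia.
    exists k; congr (_, _, _); lia.
  + case=> hx [t e]; split => // y hy /(Ple_inv hm hn) [_ _ [//|]].
    have := rank_le hm hn hy; case: e => ? ? ?; subst.
    move: hx; rewrite /inP /rankP => /and5P [? ? ? ? ?]; lia.
- move=> i; rewrite /inP /rankP => /and5P [? ? ? ? ?]; lia.
Qed.
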